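(* Let $\mathcal{C}$ be a full SCW code with symbol set $\mathcal{S}=\{\eta_0,\dots,\eta_{L-1}\}$ and weight vector $\bar{\boldsymbol{\omega}}=[\bar\omega_0,\dots,\bar\omega_{L-1}]^{\mathsf T}$, with $K=\sum_{\ell}\bar\omega_\ell$. Fix any observation vector $\mathbf r\in\mathbb Z_{\ge 0}^K$. Then: (i) the set $\mathcal A(\mathbf r,\bar c_{\mathrm s},\bar c_{\mathrm n})=\arg\max_{\mathbf s\in\mathcal C} f_{\mathbf r}(\mathbf r\mid\bar{\mathbf c},\mathbf s)$ of coherent ML solutions is the same set $\mathcal A(\mathbf r)$ for every CSI $\bar{\mathbf c}=(\bar c_{\mathrm s},\bar c_{\mathrm n})\in(0,\infty)^2$, and for every probability density $f_{\bar{\mathbf c}}$ on $(0,\infty)^2$ the set of non-coherent ML solutions $\arg\max_{\mathbf s\in\mathcal C}\int\!\!\int f_{\mathbf r}(\mathbf r\mid\bar{\mathbf c},\mathbf s)f_{\bar{\mathbf c}}(\bar c_{\mathrm s},\bar c_{\mathrm n})\,\mathrm d\bar c_{\mathrm s}\,\mathrm d\bar c_{\mathrm n}$ equals the same set $\mathcal A(\mathbf r)$; in particular the ML solutions require neither instantaneous nor statistical CSI; (ii) for every permutation $\pi$ of $\{1,\dots,K\}$ with $r[\pi(1)]\le r[\pi(2)]\le\dots\le r[\pi(K)]$ (i.e., sorting $\mathbf r$ in ascending order with arbitrary tie-breaking), the sequence $\mathbf s$ defined by $s[\pi(j)]=\eta_\ell$ whenever $\sum_{\ell'<\ell}\bar\omega_{\ell'}<j\le\sum_{\ell'\le\ell}\bar\omega_{\ell'}$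 belongs to $\mathcal A(\mathbf r)$; (iii) in particular, for a full binary CW code with $\mathcal S=\{0,1\}$, length $K$ and weight $\omega$, any codeword whose $\omega$ entries equal to $1$ are located at the positions of $\omega$ largest entries of $\mathbf r$ belongs to $\mathcal A(\mathbf r)$.
   Context: Symbol set: $\mathcal S=\{\eta_0,\eta_1,\dots,\eta_{L-1}\}$ with $L\ge 2$, $0=\eta_0<\eta_1<\dots<\eta_{L-1}=1$. A codeword is $\mathbf s=[s[1],\dots,s[K]]^{\mathsf T}\in\mathcal S^K$. Channel model: given CSI $\bar{\mathbf c}=(\bar c_{\mathrm s},\bar c_{\mathrm n})$ with $\bar c_{\mathrm s}>0,\bar c_{\mathrm n}>0$, the observations $r[1],\dots,r[K]$ are independent with $r[k]$ Poisson of mean $s[k]\bar c_{\mathrm s}+\bar c_{\mathrm n}$, so the likelihood is $f_{\mathbf r}(\mathbf r\mid\bar{\mathbf c},\mathbf s)=\prod_{k=1}^K \frac{(\bar c_{\mathrm s}s[k]+\bar c_{\mathrm n})^{r[k]}e^{-\bar c_{\mathrm s}s[k]-\bar c_{\mathrm n}}}{r[k]!}$. An SCW (strongly constant-weight) code with weight vector $\bar{\boldsymbol\omega}\in\mathbb Z_{\ge0}^L$ is a codebook $\mathcal C\subseteq\mathcal S^K$, $K=\sum_\ell\bar\omega_\ell$, in which every codeword has exactly $\bar\omega_\ell$ entries equal to $\eta_\ell$ for each $\ell$; it is full if $\mathcal C$ contains all sequences in $\mathcal S^K$ with this property. A binary CW (constant-weight) code of length $K$ and weight $\omega$ is a codebook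 $\mathcal C\subseteq\{0,1\}^K$ in which every codeword has exactly $\omega$ ones; it is full if it contains all such sequences. *)

(* Defs.v *)
From HB Require Import structures.
From mathcomp Require Import all_boot all_order all_algebra.
From mathcomp Require Import all_classical all_reals all_analysis.
Set Implicit Arguments. Unset Strict Implicit. Unset Printing Implicit Defensive.
Import Order.TTheory GRing.Theory Num.Theory.
Local Open Scope classical_set_scope.
Local Open Scope ring_scope.

Section Defs.
Variable R : realType.

(* Poisson likelihood f_r(r | (cs,cn), s) of observation r given codeword s,
   indices k = 0..K-1 stand for 1..K. *)
Definition lik (K : nat) (cs cn : R) (s : 'I_K -> R) (r : 'I_K -> nat) : R :=
  \prod_(k < K) ((cs * s k + cn) ^+ r k * expR (- (cs * s k) - cn)
                 / ((r k)`!)%:R).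

Definition argmax {d} {T : porderType d} {X : Type} (C : set X) (g : X -> T)
  : set X := [set x | C x /\ (forall y, C y -> (g y <= g x)%O)].

Definition fullSCW (L K : nat) (eta : 'I_L -> R) (w : 'I_L -> nat)
  : set ('I_K -> R) :=
  [set s | (forall k, exists l, s k = eta l) /\
           (forall l, #|[set k : 'I_K | s k == eta l]| = w l)].

Definition fullCW (K om : nat) : set ('I_K -> R) :=
  [set s | (forall k, s k = 0 \/ s k = 1) /\
           #|[set k : 'I_K | s k == 1]| = om].

Definition posquad : set (R * R) := `]0, +oo[%classic `*` `]0, +oo[%classic.

Definition is_density (f : R * R -> R) : Prop :=
  measurable_fun posquad f /\ (forall z, posquad z -> 0 <= f z) /\
  (\int[(@lebesgue_measure R \x @lebesgue_measure R)%E]_(z in posquad)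
      (f z)%:E = 1)%E.

Definition nclik (K : nat) (f : R * R -> R) (s : 'I_K -> R) (r : 'I_K -> nat)
  : \bar R :=
  (\int[(@lebesgue_measure R \x @lebesgue_measure R)%E]_(z in posquad)
      (lik z.1 z.2 s r * f z)%:E)%E.

End Defs.

(* Main.v *)
Require Import Defs.
From HB Require Import structures.
From mathcomp Require Import all_boot all_order all_algebra.
From mathcomp Require Import all_classical all_reals all_analysis.
From mathcomp Require Import perm.
From mathcomp Require Import ring zify measurable_realfun.
Import Order.TTheory GRing.Theory Num.Theory.
Local Open Scope ring_scope.
Set Implicit Arguments.
Unset Strict Implicit.

Section Comb.
Variable R : realType.

Lemma pow_exch (A B : R) (m n : nat) : 0 < A -> A <= B -> (m <= n)%N ->
  A ^+ n * B ^+ m <= B ^+ n * A ^+ m.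
Proof.
move=> A0 AB mn; rewrite -(subnKC mn) !exprD.
have -> : A ^+ m * A ^+ (n - m) * B ^+ m = A ^+ (n - m) * (A ^+ m * B ^+ m) by ring.
have -> : B ^+ m * B ^+ (n - m) * A ^+ m = B ^+ (n - m) * (A ^+ m * B ^+ m) by ring.
apply: ler_wpM2r; first by rewrite mulr_ge0 // exprn_ge0 // ltW // (lt_le_trans A0).
by apply: lerXn2r => //; rewrite nnegrE ltW // (lt_le_trans A0).
Qed.

Lemma pow_exch_lt (A B : R) (m n : nat) : 0 < A -> A < B -> (m < n)%N ->
  A ^+ n * B ^+ m < B ^+ n * A ^+ m.
Proof.
move=> A0 AB mn; rewrite -(subnKC (ltnW mn)) !exprD.
have -> : A ^+ m * A ^+ (n - m) * B ^+ m = A ^+ (n - m) * (A ^+ m * B ^+ m) by ring.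
have -> : B ^+ m * B ^+ (n - m) * A ^+ m = B ^+ (n - m) * (A ^+ m * B ^+ m) by ring.
rewrite ltr_pM2r; last by rewrite mulr_gt0 // exprn_gt0 // (lt_trans A0).
by rewrite ltrXn2r ?ltW // subn_eq0 -ltnNge.
Qed.

Definition T (cs cn x : R) (n : nat) : R :=
  (cs * x + cn) ^+ n * expR (- (cs * x) - cn) / (n`!)%:R.

Lemma T_gt0 cs cn x n : 0 < cs -> 0 < cn -> 0 <= x -> 0 < T cs cn x n.
Proof.
move=> cs0 cn0 x0; rewrite /T; apply: mulr_gt0; last by rewrite invr_gt0 ltr0n fact_gt0.
apply: mulr_gt0; last exact: expR_gt0.
by apply: exprn_gt0; apply: ltr_wpDl => //; apply: mulr_ge0 => //; exact: ltW.
Qed.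

Lemma T_exch cs cn x y m n : 0 < cs -> 0 < cn -> 0 <= x -> x <= y -> (m <= n)%N ->
  T cs cn x n * T cs cn y m <= T cs cn y n * T cs cn x m.
Proof.
move=> cs0 cn0 x0 xy mn; rewrite /T.
set A := cs * x + cn; set B := cs * y + cn.
set EA := expR _; set EB := expR (- (cs * y) - cn).
have -> : A ^+ n * EA / (n`!)%:R * (B ^+ m * EB / (m`!)%:R)
  = (A ^+ n * B ^+ m) * (EA * EB / (n`!)%:R / (m`!)%:R) by ring.
have -> : B ^+ n * EB / (n`!)%:R * (A ^+ m * EA / (m`!)%:R)
  = (B ^+ n * A ^+ m) * (EA * EB / (n`!)%:R / (m`!)%:R) by ring.
apply: ler_wpM2r.
  by rewrite !mulr_ge0 ?expR_ge0 // invr_ge0 ler0n.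
apply: pow_exch => //.
  by apply: ltr_wpDl => //; apply: mulr_ge0 => //; exact: ltW.
by rewrite /A /B lerD2r ler_pM2l.
Qed.

Lemma T_exch_lt cs cn x y m n : 0 < cs -> 0 < cn -> 0 <= x -> x < y -> (m < n)%N ->
  T cs cn x n * T cs cn y m < T cs cn y n * T cs cn x m.
Proof.
move=> cs0 cn0 x0 xy mn; rewrite /T.
set A := cs * x + cn; set B := cs * y + cn.
set EA := expR _; set EB := expR (- (cs * y) - cn).
have -> : A ^+ n * EA / (n`!)%:R * (B ^+ m * EB / (m`!)%:R)
  = (A ^+ n * B ^+ m) * (EA * EB / (n`!)%:R / (m`!)%:R) by ring.
have -> : B ^+ n * EB / (n`!)%:R * (A ^+ m * EA / (m`!)%:R)
  = (B ^+ n * A ^+ m) * (EA * EB / (n`!)%:R / (m`!)%:R) by ring.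
rewrite ltr_pM2r; last by rewrite !mulr_gt0 ?expR_gt0 // invr_gt0 ltr0n fact_gt0.
apply: pow_exch_lt => //.
  by apply: ltr_wpDl => //; apply: mulr_ge0 => //; exact: ltW.
by rewrite /A /B ltrD2r ltr_pM2l.
Qed.

Lemma mul3_le (x y x' y' z : R) : 0 <= z -> x * y <= x' * y' -> x * (y * z) <= x' * (y' * z).
Proof. by move=> z0 h; rewrite !mulrA; apply: ler_wpM2r. Qed.
Lemma mul3_lt (x y x' y' z : R) : 0 < z -> x * y < x' * y' -> x * (y * z) < x' * (y' * z).
Proof. by move=> z0 h; rewrite !mulrA ltr_pM2r. Qed.

Variable K : nat.
Implicit Types (t s : 'I_K -> R) (r : 'I_K -> nat).

Lemma likE cs cn t r : lik cs cn t r = \prod_(k < K) T cs cn (t k) (r k).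
Proof. by []. Qed.

Definition swapf t (a b : 'I_K) : 'I_K -> R := fun k => t (tperm a b k).

Lemma prod2 (u : 'I_K -> R) a b : a != b ->
  \prod_k u k = u a * (u b * \prod_(k | (k != a) && (k != b)) u k).
Proof.
move=> ab; rewrite (bigD1 a) //=; congr (_ * _).
by rewrite (bigD1 b) //= eq_sym.
Qed.

Lemma lik_swap_le cs cn t r a b : 0 < cs -> 0 < cn -> (forall k, 0 <= t k) ->
  (r b <= r a)%N -> t a <= t b -> lik cs cn t r <= lik cs cn (swapf t a b) r.
Proof.
move=> cs0 cn0 t0 rab tab.
have [->|ab] := eqVneq a b.
  have -> : swapf t b b = t by apply/funext => k; rewrite /swapf tperm1 perm1.
  by [].
rewrite !likE (prod2 _ ab) (prod2 (fun k => T cs cn (swapf t a b k) (r k)) ab).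
rewrite /swapf tpermL tpermR.
under [X in _ <= _ * (_ * X)]eq_bigr => k /andP[ka kb].
  rewrite tpermD 1?eq_sym //. over.
apply: mul3_le.
  by apply: prodr_ge0 => k _; apply: ltW; apply: T_gt0.
exact: T_exch.
Qed.

Lemma lik_swap_lt cs cn t r a b : 0 < cs -> 0 < cn -> (forall k, 0 <= t k) ->
  (r b < r a)%N -> t a < t b -> lik cs cn t r < lik cs cn (swapf t a b) r.
Proof.
move=> cs0 cn0 t0 rab tab.
have ab : a != b by apply: contraTneq rab => ->; rewrite ltnn.
rewrite !likE (prod2 _ ab) (prod2 (fun k => T cs cn (swapf t a b k) (r k)) ab).
rewrite /swapf tpermL tpermR.
under [X in _ < _ * (_ * X)]eq_bigr => k /andP[ka kb].
  rewrite tpermD 1?eq_sym //. over.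
apply: mul3_lt.
  by apply: prodr_gt0 => k _; apply: T_gt0.
exact: T_exch_lt.
Qed.

End Comb.

Section Main.
Variable R : realType.
Variable K : nat.
Implicit Types (t s : 'I_K -> R) (r : 'I_K -> nat).

Definition simord r s := forall k k', (r k < r k')%N -> s k <= s k'.
Definition samecount t s := forall v : R, #|[set k | t k == v]| = #|[set k | s k == v]|.

Lemma samecount_swap t a b : samecount (swapf t a b) t.
Proof.
move=> v; rewrite -(card_preimset [set k | t k == v] (@perm_inj _ (tperm a b))).
by apply: eq_card => k; rewrite !inE.
Qed.

Lemma eq_of_D0 t s : #|[set k | t k != s k]| = 0%N -> t = s.
Proof.
move=> D0; apply/funext => k; apply/eqP; apply: contraT => tk.
have : (0 < #|[set k | t k != s k]|)%N by apply/card_gt0P; exists k; rewrite inE.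
by rewrite D0.
Qed.

Lemma main_le cs cn t s r : 0 < cs -> 0 < cn -> (forall k, 0 <= t k) ->
  simord r s -> samecount t s -> lik cs cn t r <= lik cs cn s r.
Proof.
move=> cs0 cn0 t0 so ct.
suff H : forall n t, (#|[set k | t k != s k]| <= n)%N -> (forall k, 0 <= t k) ->
   samecount t s -> lik cs cn t r <= lik cs cn s r by apply: H (leqnn _) t0 ct.
elim=> [|n IH] {t t0 ct}t Hn t0 ct.
  rewrite leqn0 in Hn.
  by rewrite (eq_of_D0 (eqP Hn)).
set D := [set k | t k != s k] in Hn *.
have [D0|] := eqVneq #|D| 0%N; first by rewrite (eq_of_D0 D0).
rewrite -lt0n => /card_gt0P [k0' Dk0'].
case: (arg_maxP s Dk0') => k0 Dk0 k0max.
have Dk0i : k0 \in D by [].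
have Dk0b : t k0 != s k0 by move: Dk0i; rewrite inE.
have cD v : #|[set k | t k == v] :&: D| = #|[set k | s k == v] :&: D|.
  have e : [set k | t k == v] :\: D = [set k | s k == v] :\: D.
    apply/setP => k; rewrite !inE negbK.
    by case: (eqVneq (t k) (s k)) => [->|] //=; rewrite !andbF.
  have := cardsID D [set k | t k == v]; have := cardsID D [set k | s k == v].
  by rewrite e (ct v) => <- /eqP; rewrite eqn_add2r => /eqP.
have E1 : t k0 <= s k0.
  have : (0 < #|[set k | s k == t k0] :&: D|)%N.
    by rewrite -(cD (t k0)); apply/card_gt0P; exists k0; rewrite !inE eqxx.
  case/card_gt0P => k2; rewrite !inE => /andP[/eqP <- Dk2].
  have Dk2i : k2 \in D by rewrite inE.
  exact: k0max.
have [k1 Dk1 tk1] : exists2 k1, k1 \in D & t k1 = s k0.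
  have : (0 < #|[set k | t k == s k0] :&: D|)%N.
    by rewrite cD; apply/card_gt0P; exists k0; rewrite !inE eqxx.
  by case/card_gt0P => k1; rewrite !inE => /andP[/eqP ? ?]; exists k1 => //; rewrite inE.
have rk : (r k1 <= r k0)%N.
  rewrite leqNgt; apply/negP => /so sk.
  have h1 : s k1 <= s k0 by exact: k0max.
  move: Dk1; rewrite inE tk1 => /eqP; apply; apply: le_anti.
  by apply/andP; split.
apply: le_trans (lik_swap_le cs0 cn0 t0 rk _) _; first by rewrite tk1.
apply: IH.
- rewrite -ltnS; apply: leq_trans Hn; rewrite (cardsD1 k0 D) Dk0i add1n ltnS.
  apply: subset_leq_card; apply/fintype.subsetP => k; rewrite !inE /swapf.
  have [->|kk0] := eqVneq k k0; first by rewrite tpermL tk1 eqxx.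
  have [->|kk1] := eqVneq k k1; first by rewrite tpermR => _; move: Dk1; rewrite inE.
  by rewrite tpermD 1?eq_sym.
- by move=> k; rewrite /swapf.
- by move=> v; rewrite samecount_swap ct.
Qed.

End Main.

Section Ana.
Variable R : realType.

Lemma T_le1 (cs cn x : R) n : 0 <= cs * x + cn -> T cs cn x n <= 1.
Proof.
move=> y0; rewrite /T; set y := cs * x + cn.
have -> : - (cs * x) - cn = - y by rewrite /y opprD.
have h : y ^+ n / (n`!)%:R <= expR y.
  case: n => [|n]; first by rewrite expr0 fact0 divr1; apply: le_trans (expR_ge1Dx y); rewrite lerDl.
  by apply: le_trans (expR_ge1Dxn n y0); rewrite lerDr ler01.
have -> : y ^+ n * expR (- y) / (n`!)%:R = (y ^+ n / (n`!)%:R) * expR (- y) by ring.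
apply: le_trans (ler_wpM2r (expR_ge0 _) h) _.
by rewrite -expRD subrr expR0.
Qed.

Variable K : nat.
Implicit Types (t s : 'I_K -> R) (r : 'I_K -> nat).

Lemma lik_le1 cs cn t r : 0 <= cs -> 0 <= cn -> (forall k, 0 <= t k) -> lik cs cn t r <= 1.
Proof.
move=> cs0 cn0 t0; rewrite likE; apply: prodr_ile1 => k _; apply/andP; split.
  rewrite /T; apply: mulr_ge0; last by rewrite invr_ge0 ler0n.
  by rewrite mulr_ge0 ?expR_ge0 // exprn_ge0 // addr_ge0 // mulr_ge0.
by apply: T_le1; rewrite addr_ge0 // mulr_ge0.
Qed.

Lemma lik_meas t r : measurable_fun setT (fun z : R * R => lik z.1 z.2 t r).
Proof.
rewrite /lik; elim: (index_enum _) => [|k l IH].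
  under eq_fun => z do rewrite big_nil; exact: measurable_cst.
under eq_fun => z do rewrite big_cons.
apply: measurable_funM => //.
apply: measurable_funM; last exact: measurable_cst.
apply: measurable_funM.
  apply: measurable_funX; apply: measurable_funD; last exact: measurable_snd.
  by apply: measurable_funM; [exact: measurable_fst|exact: measurable_cst].
apply: measurableT_comp; first exact: measurable_expR.
apply: measurable_funB; last exact: measurable_snd.
apply: measurable_funN.
by apply: measurable_funM; [exact: measurable_fst|exact: measurable_cst].
Qed.

End Ana.

Section Int.
Variable R : realType.
Local Notation mu := (@lebesgue_measure R \x @lebesgue_measure R)%E.

Lemma mposquad : measurable (@posquad R).
Proof. by apply: measurableX; exact: measurable_itv. Qed.

Lemma int_strict (g1 g2 f : R * R -> R) :
  measurable_fun setT g1 -> measurable_fun setT g2 -> is_density f ->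
  (forall z, posquad z -> 0 <= g1 z) -> (forall z, posquad z -> g1 z < g2 z) ->
  (forall z, posquad z -> g2 z <= 1) ->
  (\int[mu]_(z in @posquad R) (g1 z * f z)%:E < \int[mu]_(z in @posquad R) (g2 z * f z)%:E)%E.
Proof.
move=> mg1T mg2T [mf [f0 f1]] g10 g12 g21.
have mD := mposquad.
have mg1 : measurable_fun (@posquad R) g1 := measurable_funS measurableT (@subsetT _ _) mg1T.
have mg2 : measurable_fun (@posquad R) g2 := measurable_funS measurableT (@subsetT _ _) mg2T.
have e : (fun z => (g2 z * f z)%:E) = (fun z => (g1 z * f z)%:E + ((g2 z - g1 z) * f z)%:E)%E.
  by apply/funext => z; rewrite -EFinD; congr (_%:E); ring.
have m1 : measurable_fun (@posquad R) (fun z => (g1 z * f z)%:E).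
  by apply/measurable_EFinP; apply: measurable_funM.
have m2 : measurable_fun (@posquad R) (fun z => ((g2 z - g1 z) * f z)%:E).
  by apply/measurable_EFinP; apply: measurable_funM => //; apply: measurable_funB.
have p1 : forall z, posquad z -> (0 <= (g1 z * f z)%:E)%E.
  by move=> z Dz; rewrite lee_fin mulr_ge0 // ?g10 ?f0.
have p2 : forall z, posquad z -> (0 <= ((g2 z - g1 z) * f z)%:E)%E.
  by move=> z Dz; rewrite lee_fin mulr_ge0 // ?f0 // subr_ge0 ltW // g12.
rewrite e ge0_integralD //.
set a := (\int[mu]_(z in @posquad R) (g1 z * f z)%:E)%E.
set b := (\int[mu]_(z in @posquad R) ((g2 z - g1 z) * f z)%:E)%E.
have afin : a \is a fin_num.
  rewrite ge0_fin_numE; last exact: integral_ge0.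
  apply: (@le_lt_trans _ _ 1%E); last exact: ltry.
  rewrite -f1; apply: ge0_le_integral => //.
    by apply/measurable_EFinP.
  move=> z Dz; rewrite lee_fin -[X in _ <= X]mul1r ler_wpM2r ?f0 //.
  exact: le_trans (ltW (g12 _ Dz)) (g21 _ Dz).
rewrite lteDl //.
rewrite lt0e integral_ge0 // andbT; apply/eqP => b0.
have H : ae_eq mu (@posquad R) (fun z => ((g2 z - g1 z) * f z)%:E) (cst 0%E).
  apply/ae_eq_integral_abs => //; rewrite -[RHS]b0; apply: eq_integral => z Dz.
  by rewrite gee0_abs // p2 //; rewrite inE in Dz.
have H2 : ae_eq mu (@posquad R) (fun z => (f z)%:E) (cst 0%E).
  apply: filterS H => z Hz Dz; move: (Hz Dz) => /= [/eqP].
  rewrite mulf_eq0 => /orP[|/eqP -> //].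
  by rewrite subr_eq0 => /eqP e'; have := g12 _ Dz; rewrite e' ltxx.
have := f1; rewrite (ae_eq_integral (cst 0%E)) //.
- by rewrite integral0 => h; move: (@lte01 R); rewrite -h ltxx.
- by apply/measurable_EFinP.
Qed.

End Int.

Section Char.
Variable R : realType.
Variable K : nat.
Variable r : 'I_K -> nat.
Variable C : ('I_K -> R) -> Prop.
Implicit Types (t s : 'I_K -> R).

Lemma posquadP (z : R * R) : posquad z -> 0 < z.1 /\ 0 < z.2.
Proof.
case: z => a b [/= ha hb].
by move: ha hb; rewrite /= !in_itv /= !andbT.
Qed.

Hypothesis Cpos : forall t, C t -> forall k, 0 <= t k.
Hypothesis Csw : forall t a b, C t -> C (swapf t a b).
Hypothesis Ccnt : forall t s, C t -> C s -> samecount t s.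

Lemma coh_char cs cn : 0 < cs -> 0 < cn ->
  argmax C (fun s => lik cs cn s r) = (fun s => C s /\ simord r s).
Proof.
move=> cs0 cn0; apply/funext => s; apply/propext; split.
  case=> Cs Hmax; split => // k k' rkk'; rewrite leNgt; apply/negP => lt.
  have h2 := Hmax _ (Csw k' k Cs).
  have h1 := lik_swap_lt cs0 cn0 (Cpos Cs) rkk' lt.
  by move: h2; rewrite leNgt h1.
case=> Cs so; split => // y Cy.
by apply: main_le => //; [exact: Cpos|exact: Ccnt].
Qed.

Lemma nc_char f : is_density f ->
  argmax C (fun s => nclik f s r) = (fun s => C s /\ simord r s).
Proof.
move=> hf; have [mf [f0 f1]] := hf.
apply/funext => s; apply/propext; split.
  case=> Cs Hmax; split => // k k' rkk'; rewrite leNgt; apply/negP => lt.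
  have h2 := Hmax _ (Csw k' k Cs).
  have h1 : (nclik f s r < nclik f (swapf s k' k) r)%E.
    apply: int_strict => //; try exact: lik_meas.
    - move=> z /posquadP [z1 z2]; rewrite likE; apply: prodr_ge0 => i _.
      by apply: ltW; apply: T_gt0 => //; exact: Cpos.
    - move=> z /posquadP [z1 z2]; exact: lik_swap_lt (Cpos Cs) rkk' lt.
    - move=> z /posquadP [z1 z2]; apply: lik_le1; try exact: ltW.
      by apply: Cpos; apply: Csw.
  by move: h2; rewrite leNgt h1.
case=> Cs so; split => // y Cy.
have mD := @mposquad R.
apply: ge0_le_integral => //.
- move=> z /posquadP [z1 z2]; rewrite lee_fin mulr_ge0 //; last by apply: f0; split; rewrite /= in_itv /= andbT.
  by rewrite likE; apply: prodr_ge0 => i _; apply: ltW; apply: T_gt0 => //; exact: Cpos.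
- apply/measurable_EFinP; apply: measurable_funM => //.
  exact: measurable_funS measurableT (@subsetT _ _) (lik_meas y r).
- apply/measurable_EFinP; apply: measurable_funM => //.
  exact: measurable_funS measurableT (@subsetT _ _) (lik_meas s r).
- move=> z Dz; have [z1 z2] := posquadP Dz; rewrite lee_fin ler_wpM2r //; first exact: f0.
  by apply: main_le => //; [exact: Cpos|exact: Ccnt].
Qed.

End Char.

Lemma card_itv K a b : (b <= K)%N -> #|[set j : 'I_K | (a <= j < b)%N]| = (b - a)%N.
Proof.
move=> bK.
have e : (\sum_(i < b | a <= i) 1 = b - a)%N.
  rewrite -[RHS]muln1 -sum_nat_const_nat big_geq_mkord; by apply: eq_bigl.
rewrite -e -sum1_card; symmetry.
apply: etrans (@big_ord_widen_cond _ _ _ b K (fun i => a <= i)%N (fun _ => 1%N) bK) _.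
by apply: eq_bigl => j; rewrite inE.
Qed.

Lemma cardcE (T : finType) (P : pred T) :
  #|[set x | P x]%classic| = #|[set x | P x]%SET|.
Proof.
apply: eq_card => x; rewrite inE; apply/idP/idP.
 - by rewrite in_setE.
 - by move=> h; rewrite in_setE.
Qed.

Section Sort.
Variable R : realType.
Variables (L : nat) (eta : 'I_L -> R) (w : 'I_L -> nat) (K : nat) (r : 'I_K -> nat).
Hypothesis hL : (2 <= L)%N.
Hypothesis hmono : forall i j : 'I_L, (i < j)%N -> eta i < eta j.
Hypothesis hK : K = (\sum_(l < L) w l)%N.

Lemma eta_le (i j : 'I_L) : (i <= j)%N -> eta i <= eta j.
Proof.
rewrite leq_eqVlt => /orP[/eqP e|/hmono/ltW //].
by rewrite (val_inj e).
Qed.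

Lemma eta_inj : injective eta.
Proof.
move=> i j e; apply: val_inj; case: (ltngtP i j) => // h.
- by have := hmono h; rewrite e ltxx.
- by have := hmono h; rewrite e ltxx.
Qed.

Definition cl (l : 'I_L) := (\sum_(l' < L | (l' < l)%N) w l')%N.
Definition cu (l : 'I_L) := (\sum_(l' < L | (l' <= l)%N) w l')%N.

Lemma sub_sum (P Q : pred 'I_L) : (forall i, P i -> Q i) ->
  (\sum_(i | P i) w i <= \sum_(i | Q i) w i)%N.
Proof.
move=> PQ; rewrite [X in (X <= _)%N]big_mkcond [X in (_ <= X)%N]big_mkcond.
apply: leq_sum => i _; case: ifP => Pi; first by rewrite PQ.
by [].
Qed.

Lemma cu_le_cl (l1 l2 : 'I_L) : (l1 < l2)%N -> (cu l1 <= cl l2)%N.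
Proof. by move=> h; apply: sub_sum => i /= hi; apply: leq_ltn_trans hi h. Qed.

Lemma cl_le_cu (l : 'I_L) : (cl l <= cu l)%N.
Proof. by apply: sub_sum => i /= hi; apply: ltnW. Qed.

Lemma cu_K (l : 'I_L) : (cu l <= K)%N.
Proof. by rewrite hK; apply: (@sub_sum _ predT). Qed.

Lemma cu_cl (l : 'I_L) : cu l = (cl l + w l)%N.
Proof.
rewrite /cu (bigD1 l) //= addnC; congr (_ + _)%N.
by apply: eq_bigl => i; rewrite ltn_neqAle andbC.
Qed.

Lemma block (j : nat) : (j < K)%N -> exists l, (cl l <= j < cu l)%N.
Proof.
move=> jK.
have L0 : (0 < L)%N by apply: leq_trans hL.
pose i0 : 'I_L := Ordinal L0.
have P0 : (cl i0 <= j)%N by rewrite /cl big_pred0.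
case: (@arg_maxnP _ i0 (fun l => cl l <= j)%N (fun l => nat_of_ord l) P0) => l Pl lmax.
exists l; rewrite Pl /=.
case: (ltnP l.+1 L) => [lL|].
  rewrite ltnNge; apply/negP => cj.
  suff : (l.+1 <= l)%N by rewrite ltnn.
  apply: (lmax (Ordinal lL)).
  rewrite /cl; apply: leq_trans cj; apply: sub_sum => i /=; by rewrite ltnS.
move=> Ll; apply: leq_trans jK _; rewrite hK /cu.
apply: (@sub_sum predT) => i _ /=.
have := ltn_ord i; have := ltn_ord l; move: Ll; clear; lia.
Qed.

Lemma block_uniq j (l1 l2 : 'I_L) : (cl l1 <= j < cu l1)%N -> (cl l2 <= j < cu l2)%N -> l1 = l2.
Proof.
move=> /andP[a1 b1] /andP[a2 b2]; apply: val_inj; case: (ltngtP l1 l2) => // h.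
- by have := cu_le_cl h; move: a2 b1; clear; lia.
- by have := cu_le_cl h; move: a1 b2; clear; lia.
Qed.

Lemma sort_in (pi : {perm 'I_K}) (s : 'I_K -> R) :
  (forall i j : 'I_K, (i <= j)%N -> (r (pi i) <= r (pi j))%N) ->
  (forall (j : 'I_K) (l : 'I_L),
     (\sum_(l' < L | (l' < l)%N) w l' <= j)%N ->
     (j < \sum_(l' < L | (l' <= l)%N) w l')%N ->
     s (pi j) = eta l) ->
  fullSCW eta w s /\ simord r s.
Proof.
move=> srt hs.
have bl (j : 'I_K) : exists2 l, (cl l <= j < cu l)%N & s (pi j) = eta l.
  have [l /andP[h1 h2]] := block (ltn_ord j).
  by exists l; [rewrite h1 h2 | exact: hs].
split; [split|].
- move=> k; have [l _ e] := bl (pi^-1 k)%g; exists l; by rewrite -e permKV.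
- move=> l; rewrite cardcE.
  rewrite -(card_preimset [set k | s k == eta l] (@perm_inj _ pi)).
  rewrite -[w l](addKn (cl l)) -cu_cl -(card_itv (cl l) (cu_K l)).
  apply: eq_card => j; rewrite !inE.
  have [l' hl' e] := bl j; rewrite e.
  apply/eqP/idP => [/eta_inj <- //|hl]; by rewrite (block_uniq hl' hl).
- move=> k k' rkk'.
  have [l hl e] := bl (pi^-1 k)%g; have [l' hl' e'] := bl (pi^-1 k')%g.
  rewrite !permKV in e e'; rewrite e e'; apply: eta_le.
  rewrite leqNgt; apply/negP => ll.
  have jj : ((pi^-1 k)%g < (pi^-1 k')%g)%N.
    rewrite ltnNge; apply/negP => /srt; rewrite !permKV; rewrite leqNgt rkk'.
    by [].
  have h := cu_le_cl ll; move: hl hl' => /andP[a1 b1] /andP[a2 b2].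
  have h1 := leq_trans b2 (leq_trans h a1).
  by move: (ltn_trans h1 jj); rewrite ltnn.
Qed.

End Sort.

Section Codes.
Variable R : realType.

Section SCW.
Variables (L : nat) (eta : 'I_L -> R) (w : 'I_L -> nat) (K : nat).
Hypothesis hL : (2 <= L)%N.
Hypothesis hmono : forall i j : 'I_L, (i < j)%N -> eta i < eta j.
Hypothesis h0 : forall i : 'I_L, val i = 0%N -> eta i = 0.

Lemma scw_pos (t : 'I_K -> R) : fullSCW eta w t -> forall k, 0 <= t k.
Proof.
case=> hv _ k; have [l ->] := hv k.
have L0 : (0 < L)%N by apply: leq_trans hL.
rewrite -(h0 (i := Ordinal L0)) //; exact: eta_le.
Qed.

Lemma scw_sw (t : 'I_K -> R) a b : fullSCW eta w t -> fullSCW eta w (swapf t a b).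
Proof.
case=> hv hc; split; first by move=> k; exact: hv.
by move=> l; rewrite cardcE samecount_swap -cardcE.
Qed.

Lemma scw_cnt (t s : 'I_K -> R) : fullSCW eta w t -> fullSCW eta w s -> samecount t s.
Proof.
case=> hvt hct [hvs hcs] v.
case: (pselect (exists l, v = eta l)) => [[l ->]|nv].
  by rewrite -!cardcE hct hcs.
apply: eq_card => k; rewrite !inE.
have [l1 ->] := hvt k; have [l2 ->] := hvs k.
have f l : (eta l == v) = false by apply/negbTE/eqP => e; apply: nv; exists l.
by rewrite !f.
Qed.

End SCW.

Section CW.
Variables (K om : nat).

Lemma cw_pos (t : 'I_K -> R) : fullCW om t -> forall k, 0 <= t k.
Proof. by case=> hv _ k; case: (hv k) => ->. Qed.

Lemma cw_sw (t : 'I_K -> R) a b : fullCW om t -> fullCW om (swapf t a b).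
Proof.
case=> hv hc; split; first by move=> k; exact: hv.
by rewrite cardcE samecount_swap -cardcE.
Qed.

Lemma cw0 (t : 'I_K -> R) : (forall k, t k = 0 \/ t k = 1) ->
  #|[set k | t k == 0%R]%SET| = (K - #|[set k | t k == 1%R]%SET|)%N.
Proof.
move=> hv.
have -> : [set k | t k == 0%R]%SET = (~: [set k | t k == 1])%SET.
  apply/setP => k; rewrite !inE; case: (hv k) => ->.
    by rewrite eqxx eq_sym oner_eq0.
  by rewrite eqxx oner_eq0.
have := cardsC [set k | t k == 1%R]%SET; rewrite card_ord => e.
apply/eqP; rewrite -(eqn_add2l #|[set k | t k == 1%R]%SET|) e subnKC //.
by apply: leq_trans (eq_leq e); exact: leq_addr.
Qed.

Lemma cw_cnt (t s : 'I_K -> R) : fullCW om t -> fullCW om s -> samecount t s.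
Proof.
case=> hvt hct [hvs hcs] v.
have [->|v1] := eqVneq v 1; first by rewrite -!cardcE hct hcs.
have [->|v0] := eqVneq v 0; first by rewrite !cw0 // -!cardcE hct hcs.
apply: eq_card => k; rewrite !inE.
have e1 : (1 == v) = false by rewrite eq_sym (negbTE v1).
have e0 : (0 == v) = false by rewrite eq_sym (negbTE v0).
by case: (hvt k) => ->; case: (hvs k) => ->; rewrite ?e1 ?e0.
Qed.

End CW.
End Codes.

Unset Implicit Arguments.
Set Strict Implicit.
Local Open Scope classical_set_scope.

Theorem theorem1 (R : realType) (L : nat) (eta : 'I_L -> R) (w : 'I_L -> nat)
  (K : nat) (r : 'I_K -> nat) :
  (2 <= L)%N ->
  (forall i j : 'I_L, (i < j)%N -> eta i < eta j) ->
  (forall i : 'I_L, val i = 0%N -> eta i = 0) ->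
  (forall i : 'I_L, val i = L.-1 -> eta i = 1) ->
  K = (\sum_(l < L) w l)%N ->
  (exists A : set ('I_K -> R),
     (* (i) coherent ML set independent of the CSI *)
     (forall cs cn : R, 0 < cs -> 0 < cn ->
        argmax (fullSCW (K:=K) eta w) (fun s => lik cs cn s r) = A) /\
     (* (i) non-coherent ML set equals it for every density on (0,oo)^2 *)
     (forall f : R * R -> R, is_density f ->
        argmax (fullSCW (K:=K) eta w) (fun s => nclik f s r) = A) /\
     (* (ii) sorting rule *)
     (forall pi : {perm 'I_K},
        (forall i j : 'I_K, (i <= j)%N -> (r (pi i) <= r (pi j))%N) ->
        forall s : 'I_K -> R,
          (forall (j : 'I_K) (l : 'I_L),
             (\sum_(l' < L | (l' < l)%N) w l' <= j)%N ->
             (j < \sum_(l' < L | (l' <= l)%N) w l')%N ->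
             s (pi j) = eta l) ->
          A s)) /\
  (* (iii) binary CW special case *)
  (forall (K' om : nat) (r' : 'I_K' -> nat) (s : 'I_K' -> R),
     @fullCW R K' om s ->
     (forall k k' : 'I_K', s k = 1 -> s k' = 0 -> (r' k' <= r' k)%N) ->
     forall cs cn : R, 0 < cs -> 0 < cn ->
       argmax (@fullCW R K' om) (fun s0 => lik cs cn s0 r') s).
Proof.
move=> hL hmono h0 h1 hK; split.
  exists (fun s => fullSCW (K:=K) eta w s /\ simord r s); split; [|split].
  - move=> cs cn cs0 cn0; apply: coh_char => //.
    + exact: scw_pos.
    + by move=> t a b; exact: scw_sw.
    + exact: scw_cnt.
  - move=> f hf; apply: nc_char => //.
    + exact: scw_pos.
    + by move=> t a b; exact: scw_sw.
    + exact: scw_cnt.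
  - by move=> pi srt s hs; apply: (sort_in hL hmono hK srt hs).
move=> K' om r' s hs hr cs cn cs0 cn0.
have E := coh_char r' (@cw_pos R K' om) (fun t a b => @cw_sw R K' om t a b) (@cw_cnt R K' om) cs0 cn0.
rewrite E; split => // k k' rkk'.
case: hs => hv hc; case: (hv k) => ek; rewrite ek; first exact: (@cw_pos R K' om s (conj hv hc)).
case: (hv k') => [e|->//].
by have := hr _ _ ek e; rewrite leqNgt rkk'.
Qed.
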